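(* Let $p,\delta,\Delta$ be positive reals with $p<1$, let $n^-<n^+$ and $a$ be positive integers, and let $I=[n^-,n^+]$. Suppose that: (1) there is a function $f$ (differentiable on $I$) such that for each integer $n\in I$, $\Pr\big(\chi(G_{n,p})\in[f(n)-\Delta,f(n)+\Delta]\big)\ge0.99$; (2) for all real $n\in I$, $f'(n)\ge \frac1a+\delta$; (3) for each integer $n\in I$ there are integers $s_n,t_n$ with $\Pr\big(\chi(G_{n,p})\in[s_n,t_n]\big)\ge0.9$; (4) there is an increasing integer-valued function $r(n)$ such that for each integer $n\in I$ there is a coupling of $G_{n,p}$ and $G_{n+ar(n),p}$ with $\Pr\big(\chi(G_{n+ar(n),p})\le\chi(G_{n,p})+r(n)\big)\ge0.4$; (5) $n^+-n^-\ge 5\Delta/\delta$ and $n^+-n^-\ge 5a\,r(n^+)$. Then there is some integer $n\in I$ with $t_n-s_n>\frac{a\delta r(n)}{2}$.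
   Context: $G_{n,p}$ is the binomial random graph on $n$ labelled vertices with edge probability $p$; $\chi$ denotes chromatic number. A coupling of two random graphs is a joint probability space on which both are defined with their correct marginal distributions. *)

(* Defs.v *)
From HB Require Import structures.
From mathcomp Require Import all_boot all_order all_algebra.
From mathcomp Require Import all_classical all_reals all_analysis.
Set Implicit Arguments. Unset Strict Implicit. Unset Printing Implicit Defensive.
Import Order.TTheory GRing.Theory Num.Theory.
Local Open Scope ring_scope.

Definition is_graph (n : nat) (E : {set {set 'I_n}}) : bool :=
  [forall e in E, #|e| == 2%N].

Definition colorable (n : nat) (E : {set {set 'I_n}}) (k : nat) : bool :=
  [exists c : {ffun 'I_n -> 'I_k},
     [forall e in E, forall x in e, forall y in e, (x != y) ==> (c x != c y)]].

Lemma colorable_n (n : nat) (E : {set {set 'I_n}}) : exists k, colorable E k.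
Proof.
exists n; apply/existsP; exists [ffun x => x].
apply/forallP => e; apply/implyP => _; apply/forallP => x; apply/implyP => _.
apply/forallP => y; apply/implyP => _; apply/implyP; rewrite !ffunE; done.
Qed.

Definition chi (n : nat) (E : {set {set 'I_n}}) : nat :=
  ex_minn (colorable_n E).

Definition gnp_weight (R : realType) (p : R) (n : nat) (E : {set {set 'I_n}}) : R :=
  if is_graph E then p ^+ #|E| * (1 - p) ^+ ('C(n, 2) - #|E|) else 0.

Definition Pr_chi (R : realType) (p : R) (n : nat) (P : pred nat) : R :=
  \sum_(E : {set {set 'I_n}} | P (chi E)) gnp_weight p E.

Definition is_coupling (R : realType) (p : R) (n m : nat)
  (mu : {ffun {set {set 'I_n}} * {set {set 'I_m}} -> R}) : Prop :=
  (forall x, 0 <= mu x) /\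
  (forall E1, \sum_(E2 : {set {set 'I_m}}) mu (E1, E2) = gnp_weight p E1) /\
  (forall E2, \sum_(E1 : {set {set 'I_n}}) mu (E1, E2) = gnp_weight p E2).

Definition Pr_coupling (R : realType) (n m : nat)
  (mu : {ffun {set {set 'I_n}} * {set {set 'I_m}} -> R})
  (P : pred ({set {set 'I_n}} * {set {set 'I_m}})) : R :=
  \sum_(x | P x) mu x.

(* Main.v *)
Require Import Defs.
From HB Require Import structures.
From mathcomp Require Import all_boot all_order all_algebra.
From mathcomp Require Import all_classical all_reals all_analysis.
From mathcomp Require Import ring lra zify.
Import Order.TTheory GRing.Theory Num.Theory.
Local Open Scope ring_scope.

Section Aux.
Variable R : realType.

Lemma sum_and (T : finType) (w : T -> R) (P Q : pred T) :
  (forall x, 0 <= w x) -> \sum_x w x = 1 ->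
  \sum_(x | P x) w x + \sum_(x | Q x) w x - 1 <= \sum_(x | P x && Q x) w x.
Proof.
move=> w0 w1.
have e1 : \sum_(x | P x) w x = \sum_(x | P x && Q x) w x + \sum_(x | P x && ~~ Q x) w x
  by rewrite (bigID Q).
have e2 : \sum_x w x = \sum_(x | Q x) w x + \sum_(x | ~~ Q x) w x
  by rewrite (bigID Q).
have e3 : \sum_(x | ~~ Q x) w x = \sum_(x | ~~ Q x && P x) w x + \sum_(x | ~~ Q x && ~~ P x) w x
  by rewrite (bigID P).
have h4 : 0 <= \sum_(x | ~~ Q x && ~~ P x) w x by apply: sumr_ge0.
have e5 : \sum_(x | P x && ~~ Q x) w x = \sum_(x | ~~ Q x && P x) w x.
  by apply: eq_bigl => x; rewrite andbC.
lra.
Qed.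

Lemma sum_pos_ex (T : finType) (w : T -> R) (P : pred T) :
  0 < \sum_(x | P x) w x -> exists x, P x.
Proof.
move=> h; apply/existsP; case: (boolP [exists x, P x]) => // /existsPn hn.
move: h; rewrite big_pred0 ?ltxx // => x; exact/negbTE/hn.
Qed.
End Aux.

Lemma gnp_total (R : realType) (p : R) (n : nat) :
  \sum_(E : {set {set 'I_n}}) gnp_weight p E = 1.
Proof.
pose F := fun e : {set 'I_n} => if #|e| == 2%N then p else 0.
pose G := fun e : {set 'I_n} => if #|e| == 2%N then 1 - p else 1.
have h1 : \prod_(e : {set 'I_n}) (F e + G e) = 1.
  by apply: big1 => e _; rewrite /F /G; case: ifP => _; lra.
rewrite -h1 bigA_distr; apply: eq_bigr => J _.
rewrite /gnp_weight.
case: ifP => hg.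
- rewrite (bigID (mem J)) /=.
  have -> : \prod_(i | i \in J) (if i \in J then F i else G i) = p ^+ #|J|.
    rewrite -prodr_const; apply: eq_bigr => i iJ; rewrite iJ /F.
    by move/forallP: hg => /(_ i); rewrite iJ /= => ->.
  congr (_ * _).
  rewrite (eq_bigr G); last by move=> i /negbTE ->.
  rewrite /G -big_mkcondr /= prodr_const; congr (_ ^+ _).
  set S := [set e : {set 'I_n} | #|e| == 2%N].
  have JS : J \subset S.
    apply/fintype.subsetP => e eJ; rewrite inE.
    by move/forallP: hg => /(_ e); rewrite eJ.
  have -> : #|[pred i | (i \notin J) && (#|i| == 2%N)]| = #|S :\: J|.
    by apply: eq_card => i; rewrite !inE.
  rewrite cardsD (finset.setIidPr JS) /S card_draws card_ord //.
- move/negbT: hg => /forallPn [e]; rewrite negb_imply => /andP [eJ he].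
  rewrite (bigD1 e) //= eJ /F (negbTE he) mul0r //.
Qed.

Section C.
Variables (R : realType) (p : R) (n m : nat).
Variable mu : {ffun {set {set 'I_n}} * {set {set 'I_m}} -> R}.
Hypothesis hmu : is_coupling p mu.

Lemma cm1 (P : pred nat) :
  Pr_coupling mu (fun x => P (chi x.1)) = Pr_chi p n P.
Proof.
case: hmu => _ [h1 _]; rewrite /Pr_coupling /Pr_chi.
rewrite -(eq_bigr _ (fun E1 _ => h1 E1)).
rewrite pair_big_dep /=; apply: eq_big => [[a b]|[a b] _] //=.
by rewrite andbT.
Qed.

Lemma cm2 (P : pred nat) :
  Pr_coupling mu (fun x => P (chi x.2)) = Pr_chi p m P.
Proof.
case: hmu => _ [_ h2]; rewrite /Pr_coupling /Pr_chi.
rewrite -(eq_bigr _ (fun E2 _ => h2 E2)).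
rewrite -exchange_big pair_big_dep /=; apply: eq_big => [[a b]|[a b] _] //=.
Qed.

Lemma ctot : \sum_x mu x = 1.
Proof.
case: hmu => _ [h1 _].
rewrite -(@gnp_total R p n) -(eq_bigr _ (fun E1 _ => h1 E1)) pair_big /=.
by apply: eq_bigr => [[a b]].
Qed.
End C.

Lemma mvt_lb (R : realType) (f : R -> R) (lo hi c : R) :
  (forall x, lo <= x <= hi -> derivable f x 1 /\ c <= derive1 f x) ->
  forall u v, lo <= u -> u <= v -> v <= hi -> c * (v - u) <= f v - f u.
Proof.
move=> hf u v lu uv vh.
have hd : forall x, x \in `[u, v] -> derivable f x 1 /\ c <= derive1 f x.
  move=> x; rewrite in_itv /= => /andP [h1 h2]; apply: hf.
  apply/andP; split; [exact: le_trans lu h1 | exact: le_trans h2 vh].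
have [x xin ->] : exists2 x, x \in `[u, v] & f v - f u = derive1 f x * (v - u).
  apply: MVT_segment => //.
    move=> x xin; rewrite derive1E; apply/derivableP.
    by apply: (proj1 (hd x _)); move: xin; rewrite !in_itv /= => /andP [h1 h2];
      apply/andP; split; apply/ltW.
  apply: derivable_within_continuous => x xin; exact: (proj1 (hd x xin)).
apply: ler_wpM2r; first by rewrite subr_ge0.
exact: (proj2 (hd x xin)).
Qed.

Lemma gnp_ge0 (R : realType) (p : R) n (E : {set {set 'I_n}}) :
  0 <= p -> p <= 1 -> 0 <= gnp_weight p E.
Proof.
move=> p0 p1; rewrite /gnp_weight; case: ifP => // _.
by apply: mulr_ge0; apply: exprn_ge0; lra.
Qed.

Lemma chi_ex (R : realType) (p : R) n (P Q : pred nat) :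
  0 <= p -> p <= 1 -> 1 < Pr_chi p n P + Pr_chi p n Q ->
  exists E : {set {set 'I_n}}, P (chi E) && Q (chi E).
Proof.
move=> p0 p1 h.
have := @sum_and R _ (@gnp_weight R p n) (fun E => P (chi E)) (fun E => Q (chi E))
  (fun E => @gnp_ge0 R p n E p0 p1) (@gnp_total R p n).
rewrite /Pr_chi in h => h2.
apply: (@sum_pos_ex R _ (@gnp_weight R p n)); lra.
Qed.

Lemma coupling_ex (R : realType) (p : R) n m
  (mu : {ffun {set {set 'I_n}} * {set {set 'I_m}} -> R}) (P1 P2 : pred nat) C :
  is_coupling p mu ->
  2 < Pr_chi p n P1 + Pr_chi p m P2 + Pr_coupling mu C ->
  exists x, [&& P1 (chi x.1), P2 (chi x.2) & C x].
Proof.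
move=> hmu h.
rewrite -(@cm1 R p n m mu hmu) -(@cm2 R p n m mu hmu) /Pr_coupling in h.
have tot := @ctot R p n m mu hmu.
have w0 : forall x, 0 <= mu x by case: hmu.
have h1 := @sum_and R _ (fun x => mu x) (fun x => P1 (chi x.1)) (fun x => P2 (chi x.2)) w0 tot.
have h2 := @sum_and R _ (fun x => mu x) (fun x => P1 (chi x.1) && P2 (chi x.2)) C w0 tot.
have [x hx] : exists x, (P1 (chi x.1) && P2 (chi x.2)) && C x.
  apply: (@sum_pos_ex R _ (fun x => mu x)); simpl in *; lra.
by exists x; move: hx; rewrite -andbA.
Qed.
Arguments chi_ex {R p n P Q}.
Arguments coupling_ex {R p n m mu P1 P2 C}.
Arguments mvt_lb {R f lo hi c}.


Fixpoint chain (nm a : nat) (r : nat -> nat) (k : nat) : nat :=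
  if k is k'.+1 then (chain nm a r k' + a * r (chain nm a r k'))%N else nm.

Lemma chain_ge nm a r k : (nm <= chain nm a r k)%N.
Proof. elim: k => //= k ih; exact: leq_trans ih (leq_addr _ _). Qed.

Theorem lemma18 (R : realType) (p delta Delta : R) (nm np a : nat)
  (f : R -> R) (s t : nat -> int) (r : nat -> nat) :
  0 < p -> p < 1 -> 0 < delta -> 0 < Delta ->
  (0 < nm)%N -> (nm < np)%N -> (0 < a)%N ->
  (* (1) *)
  (forall n : nat, (nm <= n <= np)%N ->
     Pr_chi p n (fun k => (f n%:R - Delta <= k%:R) && (k%:R <= f n%:R + Delta))
       >= 99%:R / 100%:R) ->
  (* (2) f differentiable on I with f' >= 1/a + delta *)
  (forall x : R, nm%:R <= x <= np%:R ->
     derivable f x 1 /\ derive1 f x >= a%:R^-1 + delta) ->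
  (* (3) *)
  (forall n : nat, (nm <= n <= np)%N ->
     Pr_chi p n (fun k => (s n <= k%:Z) && (k%:Z <= t n)) >= 9%:R / 10%:R) ->
  (* (4) r increasing, positive integer-valued, and the couplings *)
  (forall m n : nat, (m <= n)%N -> (r m <= r n)%N) ->
  (forall n : nat, (nm <= n <= np)%N -> (0 < r n)%N) ->
  (forall n : nat, (nm <= n <= np)%N ->
     exists mu : {ffun {set {set 'I_n}} * {set {set 'I_(n + a * r n)}} -> R},
       is_coupling p mu /\
       Pr_coupling mu (fun x => (chi x.2 <= chi x.1 + r n)%N) >= 4%:R / 10%:R) ->
  (* (5) *)
  (np - nm)%:R >= 5%:R * Delta / delta ->
  (np - nm >= 5 * a * r np)%N ->
  exists n : nat, [/\ (nm <= n <= np)%N &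
    (t n - s n)%:~R > a%:R * delta * (r n)%:R / 2%:R].
Proof.
move=> p0 p1 d0 D0 nm0 nmp a0 h1 h2 h3 rmono rpos hcoup h5 h5'.
have [//|hneg] := pselect (exists n : nat, [/\ (nm <= n <= np)%N &
    (t n - s n)%:~R > a%:R * delta * (r n)%:R / 2%:R]).
exfalso.
set c : R := a%:R.
have c0 : 0 < c by rewrite /c ltr0n.
have cn0 : c != 0 by exact: lt0r_neq0.
have H : forall n, (nm <= n <= np)%N ->
    (t n)%:~R - (s n)%:~R <= c * delta * (r n)%:R / 2.
  move=> n hn; rewrite leNgt; apply/negP => hlt; apply: hneg; exists n; split => //.
  by rewrite rmorphB.
have p0' : 0 <= p by lra.
have p1' : p <= 1 by lra.
have F1 : forall n, (nm <= n <= np)%N ->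
    (s n)%:~R <= f n%:R + Delta /\ f n%:R - Delta <= (t n)%:~R.
  move=> n hn.
  have hh : 1 < Pr_chi p n (fun k => (f n%:R - Delta <= k%:R) && (k%:R <= f n%:R + Delta))
     + Pr_chi p n (fun k => (s n <= k%:Z) && (k%:Z <= t n)).
    by have := h1 n hn; have := h3 n hn; lra.
  have [E /andP [/andP [e1 e2] /andP [e3 e4]]] := chi_ex p0' p1' hh.
  rewrite -(ler_int R) -pmulrn in e3; rewrite -(ler_int R) -pmulrn in e4.
  split; lra.
have F2 : forall n : nat, (nm <= n)%N -> (n + a * r n <= np)%N ->
    ((s (n + a * r n))%:~R : R) <= (t n)%:~R + (r n)%:R /\
    f (n + a * r n)%:R - Delta <= (t n)%:~R + (r n)%:R.
  move=> n hn1 hn2.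
  have hn : (nm <= n <= np)%N by rewrite hn1 /=; exact: leq_trans (leq_addr _ _) hn2.
  have hn' : (nm <= n + a * r n <= np)%N by rewrite hn2 andbT; exact: leq_trans hn1 (leq_addr _ _).
  have [mu [hmu hC]] := hcoup n hn.
  split.
  - have hh : 2 < Pr_chi p n (fun k => (s n <= k%:Z) && (k%:Z <= t n))
       + Pr_chi p (n + a * r n) (fun k => (s (n + a * r n) <= k%:Z) && (k%:Z <= t (n + a * r n)))
       + Pr_coupling mu (fun x => (chi x.2 <= chi x.1 + r n)%N).
      by have := h3 n hn; have := h3 _ hn'; lra.
    have [x /and3P [/andP [e1 e2] /andP [e3 e4] e5]] := coupling_ex hmu hh.
    rewrite -(ler_int R) -pmulrn in e2; rewrite -(ler_int R) -pmulrn in e3.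
    rewrite -(ler_nat R) natrD in e5.
    lra.
  - have hh : 2 < Pr_chi p n (fun k => (s n <= k%:Z) && (k%:Z <= t n))
       + Pr_chi p (n + a * r n) (fun k => (f (n + a * r n)%:R - Delta <= k%:R) && (k%:R <= f (n + a * r n)%:R + Delta))
       + Pr_coupling mu (fun x => (chi x.2 <= chi x.1 + r n)%N).
      by have := h3 n hn; have := h1 _ hn'; lra.
    have [x /and3P [/andP [e1 e2] /andP [e3 e4] e5]] := coupling_ex hmu hh.
    rewrite -(ler_int R) -pmulrn in e2.
    rewrite -(ler_nat R) natrD in e5.
    lra.
set g := chain nm a r.
have gS : forall k, g k.+1 = (g k + a * r (g k))%N by [].
have gge : forall k, (nm <= g k)%N by move=> k; exact: chain_ge.
have hnm : (nm <= nm <= np)%N by rewrite leqnn ltnW.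
have Inv : forall k, (forall i, (i <= k)%N -> (g i <= np)%N) ->
  (t (g k))%:~R <= f nm%:R + Delta + ((g k)%:R - nm%:R) / c
     + delta * ((g k)%:R - nm%:R) / 2 + c * delta * (r (g k))%:R / 2.
  elim=> [|k ih] hle.
  - have [hs _] := F1 nm hnm; have ht := H nm hnm.
    rewrite /g /= subrr mul0r mulr0 mul0r; lra.
  - have hk : (g k <= np)%N by apply: hle; exact: leqnSn.
    have hk1 : (g k + a * r (g k) <= np)%N by rewrite -gS; exact: hle.
    have iv := ih (fun i hi => hle i (leq_trans hi (leqnSn k))).
    have [F2a _] := F2 (g k) (gge k) hk1.
    have hI : (nm <= g k + a * r (g k) <= np)%N by rewrite hk1 andbT; exact: leq_trans (gge k) (leq_addr _ _).
    have ht := H _ hI.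
    rewrite gS.
    have em' : ((g k + a * r (g k))%N%:R : R) = (g k)%:R + c * (r (g k))%:R by rewrite natrD natrM.
    have key : (((g k + a * r (g k))%N%:R : R) - nm%:R) / c = ((g k)%:R - nm%:R) / c + (r (g k))%:R.
      by rewrite em'; field; exact: cn0.
    have dm : delta * (((g k + a * r (g k))%N%:R : R) - nm%:R) = delta * ((g k)%:R - nm%:R) + c * delta * (r (g k))%:R.
      by rewrite em'; ring.
    lra.
have [j [hall hj]] : exists j, (forall i, (i <= j)%N -> (g i <= np)%N) /\ (np < g j.+1)%N.
  have cl : forall k, (exists j, (forall i, (i <= j)%N -> (g i <= np)%N) /\ (np < g j.+1)%N) \/
     ((nm + k <= g k)%N /\ forall i, (i <= k)%N -> (g i <= np)%N).
    elim=> [|k [ex|[hk hall]]]; first (right; split; first by rewrite addn0).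
    - by move=> i; rewrite leqn0 => /eqP ->; exact: ltnW nmp.
    - by left.
    - case: (leqP (g k.+1) np) => h; last by left; exists k.
      right; split.
        have hI : (nm <= g k <= np)%N by rewrite gge; apply: hall.
        have := rpos _ hI; rewrite gS => hr.
        have : (0 < a * r (g k))%N by rewrite muln_gt0 a0.
        lia.
      move=> i; rewrite leq_eqVlt => /orP [/eqP -> // | ]; rewrite ltnS; exact: hall.
  case: (cl np.+1) => [//|[h1' h2']].
  have := h2' np.+1 (leqnn _); lia.
case: j hall hj => [|k] hall hj.
  have : (r nm <= r np)%N by apply: rmono; exact: ltnW.
  move=> hr; have hy : (a * r nm <= a * r np)%N by rewrite leq_mul2l hr orbT.
  move: h5'; rewrite -mulnA; move: hj; rewrite /g /=. lia.
have hk1 : (g k + a * r (g k) <= np)%N by rewrite -gS; exact: hall.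
have iv := Inv k (fun i hi => hall i (leq_trans hi (leqnSn k))).
set X := (g k + a * r (g k))%N.
have F2b : f X%:R - Delta <= (t (g k))%:~R + (r (g k))%:R.
  by have [_ h] := F2 (g k) (gge k) hk1; exact: h.
have hX : (nm <= X <= np)%N by rewrite hk1 andbT; exact: leq_trans (gge k) (leq_addr _ _).
have hmvt : (c^-1 + delta) * (X%:R - nm%:R) <= f X%:R - f nm%:R.
  case/andP: hX => ha hb.
  have := mvt_lb h2 nm%:R X%:R (lexx _); rewrite !ler_nat => hh.
  exact: hh.
have em' : (X%:R : R) = (g k)%:R + c * (r (g k))%:R by rewrite natrD natrM.
have key : (c^-1 + delta) * (X%:R - nm%:R) = ((g k)%:R - nm%:R) / c + (r (g k))%:R + delta * (X%:R - nm%:R).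
  by rewrite em'; field; exact: cn0.
have dm : delta * (X%:R - nm%:R) = delta * ((g k)%:R - nm%:R) + c * delta * (r (g k))%:R.
  by rewrite em'; ring.
have hsmall : delta * (X%:R - nm%:R) <= 4 * Delta by lra.
have hj' : (np < X + a * r X)%N by move: hj; rewrite gS.
have hrX : (r X <= r np)%N by apply: rmono; case/andP: hX.
have e1 : (np%:R : R) < X%:R + c * (r X)%:R by rewrite -natrM -natrD ltr_nat.
have e2 : c * (r X)%:R <= c * (r np)%:R by rewrite ler_wpM2l ?ler_nat // ltW.
have e3 : 5 * c * (r np)%:R <= ((np - nm)%N%:R : R).
  by rewrite -(natrM _ 5 a) -natrM ler_nat.
have eL : ((np - nm)%N%:R : R) = np%:R - nm%:R by rewrite natrB // ltnW.
have e4 : 5 * Delta <= (np - nm)%:R * delta by rewrite -ler_pdivrMr.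
have e5 : 4 / 5 * ((np - nm)%N%:R : R) < X%:R - nm%:R by lra.
have e6 : delta * (4 / 5 * ((np - nm)%N%:R : R)) < delta * (X%:R - nm%:R) by rewrite ltr_pM2l.
lra.
Qed.
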